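(* Let $\alpha=(\alpha_1,\dots,\alpha_k)$ be an integer composition of $n>0$ and let $\max(\alpha)$ be its largest part. Then the parabolic Tamari lattice $\mathrm{Tam}(\alpha)$ has order dimension $n-\max(\alpha)$.
   Context: The $\alpha$-regions are the sets $\{\alpha_1+\dots+\alpha_{i-1}+1,\dots,\alpha_1+\dots+\alpha_i\}$, $i\in[k]$, of nodes in $[n]$. An $\alpha$-arc is a pair $w_{a,b}=(a,b)$ with $1\le a<b\le n$ and $a,b$ in different $\alpha$-regions. Let $G_\alpha$ be the directed graph on $\alpha$-arcs with an edge $w_{a_1,b_1}\to w_{a_2,b_2}$ between distinct arcs whenever either $a_1,a_2$ are in the same $\alpha$-region and $a_1\le a_2<b_2\le b_1$, or $a_1,a_2$ are in different $\alpha$-regions, $a_2<a_1<b_2\le b_1$, and $a_1,b_2$ are in different $\alpha$-regions. For a directed graph $G$, a maximal orthogonal pair is a pair $(X,Y)$ of disjoint vertex subsets with no edge from $X$ to $Y$, maximal for this property; ordered by $X\subseteq X'$ they form a lattice $L(G)$. $\mathrm{Tam}(\alpha):=L(G_\alpha)$ (the extremal lattice with Galois graph $G_\alpha$). The order dimension of a poset is the least $d$ such that it embeds as a subposet of $\mathbb R^d$ with the componentwise order. *)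

(* Defs.v *)
From Stdlib Require Import Reals.
From mathcomp Require Import all_boot.
Set Implicit Arguments. Unset Strict Implicit. Unset Printing Implicit Defensive.

(* Prefix sums s_j = alpha_1 + ... + alpha_j (s_0 = 0). *)
Definition psum (alpha : seq nat) (j : nat) : nat := sumn (take j alpha).

(* The i-th alpha-region (0-indexed i < k): {s_i + 1, ..., s_{i+1}}. *)
Definition in_region (alpha : seq nat) (i : nat) (a : nat) : bool :=
  (psum alpha i < a) && (a <= psum alpha i.+1).

Definition same_region (alpha : seq nat) (a b : nat) : bool :=
  [exists i : 'I_(size alpha), in_region alpha i a && in_region alpha i b].

Definition is_arc (alpha : seq nat) (n : nat) (p : 'I_n.+1 * 'I_n.+1) : bool :=
  [&& 1 <= p.1, p.1 < p.2 & ~~ same_region alpha p.1 p.2].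

Definition arc (alpha : seq nat) (n : nat) := {p : 'I_n.+1 * 'I_n.+1 | is_arc alpha p}.

Definition Gedge (alpha : seq nat) (n : nat) (w1 w2 : arc alpha n) : bool :=
  let a1 := nat_of_ord (val w1).1 in let b1 := nat_of_ord (val w1).2 in
  let a2 := nat_of_ord (val w2).1 in let b2 := nat_of_ord (val w2).2 in
  (w1 != w2) &&
  ( [&& same_region alpha a1 a2, a1 <= a2, a2 < b2 & b2 <= b1]
  || [&& ~~ same_region alpha a1 a2, a2 < a1, a1 < b2, b2 <= b1
       & ~~ same_region alpha a1 b2]).

Definition orth_pair (T : finType) (e : rel T) (XY : {set T} * {set T}) : bool :=
  [disjoint XY.1 & XY.2] && [forall x in XY.1, forall y in XY.2, ~~ e x y].

Definition max_orth_pair (T : finType) (e : rel T) (XY : {set T} * {set T}) : bool :=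
  orth_pair e XY &&
  [forall XY' : {set T} * {set T},
     (orth_pair e XY' && (XY.1 \subset XY'.1) && (XY.2 \subset XY'.2)) ==> (XY' == XY)].

Definition LG (T : finType) (e : rel T) := {XY : {set T} * {set T} | max_orth_pair e XY}.

Definition LG_le (T : finType) (e : rel T) : rel (LG e) :=
  fun u v => (val u).1 \subset (val v).1.

Definition Tam (alpha : seq nat) (n : nat) := LG (@Gedge alpha n).
Definition Tam_le (alpha : seq nat) (n : nat) : rel (Tam alpha n) := @LG_le _ (@Gedge alpha n).

Definition embeds_in_Rd (P : Type) (le : rel P) (d : nat) : Prop :=
  exists f : P -> 'I_d -> R,
    forall x y, le x y <-> (forall i, Rle (f x i) (f y i)).

Definition order_dimension_is (P : Type) (le : rel P) (d : nat) : Prop :=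
  embeds_in_Rd le d /\ (forall d', embeds_in_Rd le d' -> d <= d').

Definition max_part (alpha : seq nat) : nat := \max_(a <- alpha) a.

(* Main.v *)
Require Import Defs.
From Stdlib Require Import Reals.
From mathcomp Require Import all_boot.
From Stdlib Require Import Lra.
From mathcomp Require Import zify.
Set Implicit Arguments. Unset Strict Implicit. Unset Printing Implicit Defensive.

Lemma orthP (T : finType) (e : rel T) (p : {set T} * {set T}) :
  orth_pair e p -> [disjoint p.1 & p.2] /\ (forall x y, x \in p.1 -> y \in p.2 -> ~~ e x y).
Proof.
case/andP=> Hd /forallP Hf; split=> // x y Hx Hy.
by move: (Hf x); rewrite Hx /= => /forallP /(_ y); rewrite Hy.
Qed.

Lemma orth_disj (T : finType) (e : rel T) (p : {set T} * {set T}) x :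
  orth_pair e p -> x \in p.1 -> x \in p.2 -> False.
Proof.
case/orthP=> Hd _ H1 H2; move/disjoint_setI0: Hd => /setP /(_ x).
by rewrite inE H1 H2 inE.
Qed.

Lemma orth_edge (T : finType) (e : rel T) (p : {set T} * {set T}) x y :
  orth_pair e p -> x \in p.1 -> y \in p.2 -> ~~ e x y.
Proof. by case/orthP=> _ H; apply: H. Qed.

Lemma orth_intro (T : finType) (e : rel T) (p : {set T} * {set T}) :
  (forall x, x \in p.1 -> x \in p.2 -> False) ->
  (forall x y, x \in p.1 -> y \in p.2 -> ~~ e x y) -> orth_pair e p.
Proof.
move=> Hd He; apply/andP; split.
  apply/pred0P=> x /=; apply/negbTE/negP=> /andP [H1 H2]; exact: (Hd x).
apply/forallP=> x; apply/implyP=> Hx; apply/forallP=> y; apply/implyP=> Hy.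
exact: He.
Qed.

Lemma mop_orth (T : finType) (e : rel T) p : max_orth_pair e p -> orth_pair e p.
Proof. by case/andP. Qed.

Lemma mop_max (T : finType) (e : rel T) p q : max_orth_pair e p -> orth_pair e q ->
  p.1 \subset q.1 -> p.2 \subset q.2 -> q = p.
Proof.
case/andP=> _ /forallP /(_ q) H Hq H1 H2; apply/eqP.
by move: H; rewrite Hq H1 H2.
Qed.

Lemma mop_X (T : finType) (e : rel T) p x : max_orth_pair e p -> x \notin p.1 ->
  x \in p.2 \/ exists2 y, y \in p.2 & e x y.
Proof.
move=> Hm Hx; case Hx2: (x \in p.2); first by left.
case: (boolP [exists y in p.2, e x y]).
  by case/existsP=> y /andP [Hy Hxy]; right; exists y.
move=> Hn; exfalso.
have Ho : orth_pair e (x |: p.1, p.2).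
  have [Hd He] := orthP (mop_orth Hm).
  apply: orth_intro => /=.
    move=> z; rewrite in_setU1 => /orP [/eqP -> | Hz]; first by rewrite Hx2.
    by move=> Hz2; apply: (orth_disj (mop_orth Hm) Hz Hz2).
  move=> z y; rewrite in_setU1 => /orP [/eqP -> | Hz] Hy.
    apply/negP=> Hxy; move/negP: Hn; apply; apply/existsP; exists y; by rewrite Hy.
  exact: He.
have := mop_max Hm Ho (subsetUr _ _) (subxx _).
case: p Hm Hx Hx2 Hn Ho => p1 p2 /= _ Hx _ _ _ [] Hp.
by move: Hx; rewrite -Hp setU11.
Qed.

Lemma mop_Y (T : finType) (e : rel T) p y : max_orth_pair e p -> y \notin p.2 ->
  y \in p.1 \/ exists2 x, x \in p.1 & e x y.
Proof.
move=> Hm Hy; case Hy1: (y \in p.1); first by left.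
case: (boolP [exists x in p.1, e x y]).
  by case/existsP=> x /andP [Hx Hxy]; right; exists x.
move=> Hn; exfalso.
have Ho : orth_pair e (p.1, y |: p.2).
  have [Hd He] := orthP (mop_orth Hm).
  apply: orth_intro => /=.
    move=> z Hz; rewrite in_setU1 => /orP [/eqP Hzy | Hz2]; first by move: Hz; rewrite Hzy Hy1.
    by apply: (orth_disj (mop_orth Hm) Hz Hz2).
  move=> x z Hx; rewrite in_setU1 => /orP [/eqP -> | Hz].
    apply/negP=> Hxy; move/negP: Hn; apply; apply/existsP; exists x; by rewrite Hx.
  exact: He.
have := mop_max Hm Ho (subxx _) (subsetUr _ _).
case: p Hm Hy Hy1 Hn Ho => p1 p2 /= _ Hy _ _ _ [] Hp.
by move: Hy; rewrite -Hp setU11.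
Qed.

Lemma mop_anti (T : finType) (e : rel T) p q : max_orth_pair e p -> max_orth_pair e q ->
  p.1 \subset q.1 -> q.2 \subset p.2.
Proof.
move=> Hp Hq Hs; apply/subsetP=> y Hy; apply/negPn/negP=> Hy'.
case: (mop_Y Hp Hy') => [H1 | [x Hx Hxy]].
  exact: (orth_disj (mop_orth Hq) (subsetP Hs _ H1) Hy).
by move: (orth_edge (mop_orth Hq) (subsetP Hs _ Hx) Hy); rewrite Hxy.
Qed.

Lemma mop_ext (T : finType) (e : rel T) p : orth_pair e p ->
  exists q, [/\ max_orth_pair e q, p.1 \subset q.1 & p.2 \subset q.2].
Proof.
move=> Hp.
pose P := fun q : {set T} * {set T} => [&& orth_pair e q, p.1 \subset q.1 & p.2 \subset q.2].
have HP : P p by rewrite /P Hp !subxx.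
case: (@arg_maxnP _ p P (fun q => #|q.1| + #|q.2|) HP) => q /and3P [Hq1 Hq2 Hq3] Hmax.
exists q; split=> //; apply/andP; split=> //.
apply/forallP=> r; apply/implyP=> /andP [/andP [Hr Hr1] Hr2].
have HPr : P r by rewrite /P Hr (subset_trans Hq2 Hr1) (subset_trans Hq3 Hr2).
have := Hmax r HPr.
have c1 := subset_leq_card Hr1; have c2 := subset_leq_card Hr2.
move=> Hle.
have e1 : #|r.1| <= #|q.1| by rewrite -(leq_add2r #|q.2|) (leq_trans _ Hle) // leq_add2l.
have e2 : #|r.2| <= #|q.2| by rewrite -(leq_add2l #|q.1|) (leq_trans _ Hle) // leq_add2r.
have E1 : q.1 = r.1 by apply/eqP; rewrite eqEcard Hr1 e1.
have E2 : q.2 = r.2 by apply/eqP; rewrite eqEcard Hr2 e2.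
by case: q r E1 E2 {Hmax HPr Hle c1 c2 e1 e2 Hr Hr1 Hr2 Hq1 Hq2 Hq3} => q1 q2 [r1 r2] /= -> ->.
Qed.

Lemma chain_card (T : finType) (F A B : {set T}) (R : rel T) :
  (forall u v, u \in F -> v \in F -> u != v -> R u v || R v u) ->
  (forall u v, u \in A -> u \in F -> v \in F -> R u v -> v \in A) ->
  (forall u v, u \in B -> u \in F -> v \in F -> R u v -> v \in B) ->
  #|A :&: F| <= #|B :&: F| -> A :&: F \subset B :&: F.
Proof.
move=> Htot HA HB Hc; apply/subsetP=> u; rewrite inE => /andP [Hu HuF].
rewrite inE HuF andbT; apply/negPn/negP=> HuB.
have Hs : B :&: F \proper A :&: F.
  rewrite properE; apply/andP; split.
    apply/subsetP=> v; rewrite !inE => /andP [Hv HvF]; rewrite HvF andbT.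
    case: (eqVneq u v) => [Euv | Nuv]; first by move: HuB; rewrite Euv Hv.
    case/orP: (Htot u v HuF HvF Nuv) => H; first exact: (HA u v).
    by move: HuB; rewrite (HB v u Hv HvF HuF H).
  apply/subsetPn; exists u; first by rewrite !inE Hu HuF.
  by rewrite !inE negb_and HuB.
by move: (proper_card Hs); rewrite ltnNge Hc.
Qed.

Lemma std_example (P : Type) (le : rel P) d m (a b : 'I_m -> P) :
  embeds_in_Rd le d -> (forall i j, i != j -> le (a j) (b i)) ->
  (forall i, ~~ le (a i) (b i)) -> m <= d.
Proof.
case=> f Hf Hab Hn.
have Hex : forall i, exists c, (if Rlt_dec (f (b i) c) (f (a i) c) then true else false).
  move=> i; case: (boolP [exists c, (if Rlt_dec (f (b i) c) (f (a i) c) then true else false)]) => [/existsP // | ].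
  rewrite negb_exists => /forallP Hall.
  move/negP: (Hn i) => Hn'; exfalso; apply: Hn'; apply/Hf => c; move: (Hall c).
  by case: Rlt_dec => // H _; apply: Rnot_lt_le.
pose g i := xchoose (Hex i).
have Hg i : Rlt (f (b i) (g i)) (f (a i) (g i)).
  by move: (xchooseP (Hex i)); case: Rlt_dec.
have ginj : injective g.
  move=> i j Eij; apply/eqP/negPn/negP => Nij.
  have H1 := proj1 (Hf _ _) (Hab i j Nij) (g i).
  have Nji : j != i by rewrite eq_sym.
  have H2 := proj1 (Hf _ _) (Hab j i Nji) (g j).
  have := Hg i; have := Hg j; rewrite -Eij in H2 *.
  move=> Hj Hi; lra.
by have := @leq_card _ _ g ginj; rewrite !card_ord.
Qed.

Fixpoint rg (al : seq nat) (a : nat) : nat :=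
  if al is x :: al' then (if a <= x then 0 else (rg al' (a - x)).+1) else 0.

Lemma psum0 al : psum al 0 = 0.
Proof. by rewrite /psum take0. Qed.

Lemma psum_cons x al j : psum (x :: al) j.+1 = x + psum al j.
Proof. by []. Qed.

Lemma rg_lt al c j : 0 < c -> c <= sumn al -> (rg al c < j) = (c <= psum al j).
Proof.
elim: al c j => [|x al IH] c j Hc /=.
  by rewrite leqn0 => /eqP Ec; move: Hc; rewrite Ec.
move=> Hcs; case: j => [|j]; first by rewrite psum0 ltn0 leqn0; case: c Hc {Hcs}.
rewrite psum_cons; case: (leqP c x) => Hcx.
  by rewrite ltnS leq0n (leq_trans Hcx) ?leq_addr.
rewrite ltnS IH ?subn_gt0 // ?leq_subLR //.
Qed.

Lemma rg_mono al a b : a <= b -> rg al a <= rg al b.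
Proof.
elim: al a b => [|x al IH] a b Hab //=.
case: (leqP a x) => Ha; first by [].
have Hb : x < b by apply: leq_trans Hab.
rewrite (leqNgt b x) Hb /= ltnS; apply: IH; exact: leq_sub2r.
Qed.

Lemma rg_size al a : 0 < a -> a <= sumn al -> rg al a < size al.
Proof. by move=> H1 H2; rewrite rg_lt // /psum take_size. Qed.

Lemma in_region_rg al i a : 0 < a -> a <= sumn al -> in_region al i a = (rg al a == i).
Proof.
move=> H1 H2; rewrite /in_region ltnNge -rg_lt // -rg_lt // -leqNgt ltnS.
by rewrite eq_sym eqn_leq.
Qed.

Lemma same_region_rg al a b : 0 < a -> a <= sumn al -> 0 < b -> b <= sumn al ->
  same_region al a b = (rg al a == rg al b).
Proof.
move=> Ha1 Ha2 Hb1 Hb2; apply/existsP/eqP.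
  by case=> i /andP []; rewrite !in_region_rg // => /eqP -> /eqP ->.
move=> E; exists (Ordinal (rg_size Ha1 Ha2)).
by rewrite !in_region_rg //= E !eqxx.
Qed.

Lemma rg_ltn al a b : rg al a < rg al b -> a < b.
Proof. by move=> H; rewrite ltnNge; apply/negP => /(rg_mono al); rewrite leqNgt H. Qed.

Lemma rg_shift x al a : 0 < a -> rg (x :: al) (a + x) = (rg al a).+1.
Proof. by move=> Ha /=; rewrite -{2}(add0n x) leq_add2r leqNgt Ha /= addnK. Qed.

Lemma rg_head x al a : a <= x -> rg (x :: al) a = 0.
Proof. by move=> /= ->. Qed.
Arguments rg : simpl never.

Definition sA al n (x : Defs.arc al n) : nat := (val x).1.
Definition sB al n (x : Defs.arc al n) : nat := (val x).2.

Lemma arc_props al n (x : Defs.arc al n) :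
  [/\ 0 < sA x, sA x < sB x, sB x <= n & ~~ same_region al (sA x) (sB x)].
Proof.
case: x => [[a b] Hx]; move: Hx; rewrite /is_arc /sA /sB /= => /and3P [H1 H2 H3]; split=> //.
by rewrite -ltnS ltn_ord.
Qed.

Lemma arc_rg al n (x : Defs.arc al n) : sumn al = n ->
  rg al (sA x) < rg al (sB x).
Proof.
move=> Hn; case: (arc_props x) => H1 H2 H3 H4.
have H5 : sA x <= n := ltnW (leq_trans H2 H3).
move: H4; rewrite same_region_rg ?Hn //; last by exact: ltn_trans H1 H2.
by rewrite ltn_neqAle => ->; rewrite rg_mono // ltnW.
Qed.

Lemma arc_eq al n (x y : Defs.arc al n) : sA x = sA y -> sB x = sB y -> x = y.
Proof.
case: x y => [[a b] Hx] [[c d] Hy]; rewrite /sA /sB /= => E1 E2.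
apply: val_inj => /=; congr pair; exact: val_inj.
Qed.

Lemma arc_neqA al n (x y : Defs.arc al n) : sA x != sA y -> x != y.
Proof. by apply: contraNneq => ->. Qed.
Lemma arc_neqB al n (x y : Defs.arc al n) : sB x != sB y -> x != y.
Proof. by apply: contraNneq => ->. Qed.

Lemma GedgeE al n (x y : Defs.arc al n) : sumn al = n ->
  Gedge x y = (x != y) &&
   ([&& rg al (sA x) == rg al (sA y), sA x <= sA y, sA y < sB y & sB y <= sB x]
 || [&& rg al (sA x) != rg al (sA y), sA y < sA x, sA x < sB y, sB y <= sB x
       & rg al (sA x) != rg al (sB y)]).
Proof.
move=> Hn; case: (arc_props x) (arc_props y) => x1 x2 x3 _ [y1 y2 y3 _].
have x4 : sA x <= n := ltnW (leq_trans x2 x3).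
have y4 : sA y <= n := ltnW (leq_trans y2 y3).
have y5 : 0 < sB y by exact: ltn_trans y1 y2.
rewrite /Gedge -/(sA x) -/(sB x) -/(sA y) -/(sB y).
by rewrite !same_region_rg ?Hn.
Qed.

Lemma edge1 al n (x y : Defs.arc al n) : sumn al = n -> x != y ->
  rg al (sA x) = rg al (sA y) -> sA x <= sA y -> sB y <= sB x -> Gedge x y.
Proof.
move=> Hn H0 H1 H2 H3; rewrite GedgeE // H0 H1 eqxx H2 H3 /=.
by case: (arc_props y) => _ -> _ _.
Qed.

Lemma edge2 al n (x y : Defs.arc al n) : sumn al = n -> x != y ->
  rg al (sA x) != rg al (sA y) -> sA y < sA x -> sA x < sB y -> sB y <= sB x ->
  rg al (sA x) != rg al (sB y) -> Gedge x y.
Proof.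
move=> Hn H0 H1 H2 H3 H4 H5; rewrite GedgeE // H0 H1 H2 H3 H4 H5 /=.
by rewrite orbT.
Qed.

Lemma edge_inv al n (x y : Defs.arc al n) : sumn al = n -> Gedge x y ->
  x != y /\
  ((rg al (sA x) = rg al (sA y) /\ sA x <= sA y /\ sB y <= sB x)
 \/ (rg al (sA x) <> rg al (sA y) /\ sA y < sA x /\ sA x < sB y /\ sB y <= sB x
     /\ rg al (sA x) <> rg al (sB y))).
Proof.
move=> Hn; rewrite GedgeE // => /andP [H0 /orP [/and4P [/eqP H1 H2 _ H3] | /and5P [/eqP H1 H2 H3 H4 /eqP H5]]].
  by split=> //; left.
by split=> //; right.
Qed.

Lemma startC al n (p : {set Defs.arc al n} * {set Defs.arc al n}) (x z : Defs.arc al n) :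
  sumn al = n -> max_orth_pair (@Gedge al n) p -> x \in p.1 ->
  sA z = sA x -> sB z < sB x -> z \in p.1.
Proof.
move=> Hn Hm Hx EA LB; apply/negPn/negP => Hz.
have Nxz : x != z by apply: arc_neqB; rewrite neq_ltn LB orbT.
have Exz : Gedge x z by apply: edge1 => //; rewrite ?EA // ltnW.
case: (mop_X Hm Hz) => [Hz2 | [y Hy Hzy]].
  by move: (orth_edge (mop_orth Hm) Hx Hz2); rewrite Exz.
have Exy : Gedge x y.
  case: (edge_inv Hn Hzy) => _ [[H1 [H2 H3]] | [H1 [H2 [H3 [H4 H5]]]]].
    apply: edge1 => //; rewrite -?EA //; last by apply: leq_trans H3 (ltnW LB).
    by apply: arc_neqB; rewrite neq_ltn (leq_ltn_trans H3 LB) orbT.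
  apply: edge2; rewrite -?EA //; first by apply: arc_neqA; rewrite -EA neq_ltn H2 orbT.
  - by apply/eqP.
  - by apply: leq_trans H4 (ltnW LB).
  - by apply/eqP.
by move: (orth_edge (mop_orth Hm) Hx Hy); rewrite Exy.
Qed.

Lemma endC al n (p : {set Defs.arc al n} * {set Defs.arc al n}) (y z : Defs.arc al n) :
  sumn al = n -> max_orth_pair (@Gedge al n) p -> y \in p.2 ->
  sB z = sB y ->
  (rg al (sA y) < rg al (sA z) \/ (rg al (sA z) = rg al (sA y) /\ sA z < sA y)) ->
  z \in p.2.
Proof.
move=> Hn Hm Hy EB Hah; apply/negPn/negP => Hz.
have Nzy : z != y.
  apply: arc_neqA; case: Hah => [H | [_ H]]; rewrite neq_ltn.
    by rewrite (rg_ltn H) orbT.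
  by rewrite H.
case: (arc_props z) => z1 z2 z3 _.
have Rz := arc_rg z Hn.
have Ezy : Gedge z y.
  case: Hah => [H | [H1 H2]].
    apply: edge2 => //; rewrite ?EB //.
    - by rewrite neq_ltn H orbT.
    - exact: rg_ltn H.
    - by rewrite -EB.
    - by rewrite -EB neq_ltn Rz.
  by apply: edge1 => //; rewrite ?EB // ltnW.
case: (mop_Y Hm Hz) => [Hz1 | [x Hx Hxz]].
  by move: (orth_edge (mop_orth Hm) Hz1 Hy); rewrite Ezy.
have Exy : Gedge x y.
  have RzB : rg al (sB z) = rg al (sB y) by rewrite EB.
  case: (edge_inv Hn Hxz) => _ [[H1 [H2 H3]] | [H1 [H2 [H3 [H4 H5]]]]].
  - have a1 : sA x < sB y by rewrite -EB; exact: leq_ltn_trans H2 z2.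
    have a2 : sB y <= sB x by rewrite -EB.
    have a3 : rg al (sA x) != rg al (sB y) by rewrite H1 -RzB neq_ltn Rz.
    case: Hah => [H | [H6 H7]].
    + have Hlt : sA y < sA x by apply: (@rg_ltn al); rewrite H1.
      have b1 : x != y by apply: arc_neqA; rewrite neq_ltn Hlt orbT.
      have b2 : rg al (sA x) != rg al (sA y) by rewrite H1 neq_ltn H orbT.
      exact: edge2.
    + have Hlt : sA x < sA y := leq_ltn_trans H2 H7.
      have b1 : x != y by apply: arc_neqA; rewrite neq_ltn Hlt.
      apply: edge1 => //; [by rewrite H1 | exact: ltnW].
  - have Hr : rg al (sA z) < rg al (sA x).
      by rewrite ltn_neqAle eq_sym; apply/andP; split; [apply/eqP | apply: rg_mono (ltnW H2)].
    have Hr' : rg al (sA y) < rg al (sA x).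
      case: Hah => [H | [H6 H7]]; [exact: ltn_trans H Hr | by rewrite -H6].
    have Hlt : sA y < sA x := rg_ltn Hr'.
    have b1 : x != y by apply: arc_neqA; rewrite neq_ltn Hlt orbT.
    have b2 : rg al (sA x) != rg al (sA y) by rewrite neq_ltn Hr' orbT.
    have a1 : sA x < sB y by rewrite -EB.
    have a2 : sB y <= sB x by rewrite -EB.
    have a3 : rg al (sA x) != rg al (sB y) by rewrite -RzB; apply/eqP.
    exact: edge2.
by move: (orth_edge (mop_orth Hm) Hx Hy); rewrite Exy.
Qed.

Lemma max_part_cons x al : max_part (x :: al) = maxn x (max_part al).
Proof. by rewrite /max_part big_cons. Qed.

Lemma max_part_nil : max_part [::] = 0.
Proof. by rewrite /max_part big_nil. Qed.

Lemma max_part_le al : max_part al <= sumn al.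
Proof.
elim: al => [|x al IH]; first by rewrite max_part_nil.
by rewrite max_part_cons /= geq_max leq_addr /= (leq_trans IH) // leq_addl.
Qed.

Lemma max_part_idx al : al != [::] -> exists2 m, m < size al & nth 0 al m = max_part al.
Proof.
elim: al => [|x al IH] // _.
case: (eqVneq al [::]) => [-> | Hne].
  by exists 0 => //; rewrite max_part_cons max_part_nil maxn0.
case: (IH Hne) => m Hm Em.
rewrite max_part_cons; case: (leqP (max_part al) x) => Hx.
  by exists 0 => //; rewrite (maxn_idPl Hx).
by exists m.+1 => //; rewrite /= Em (maxn_idPr (ltnW Hx)).
Qed.

Lemma psum_succ al m : m < size al -> psum al m.+1 = psum al m + nth 0 al m.
Proof. by move=> Hm; rewrite /psum (take_nth 0 Hm) sumn_rcons. Qed.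

Lemma psum_le al m : psum al m <= sumn al.
Proof.
rewrite /psum -{2}(cat_take_drop m al) sumn_cat; exact: leq_addr.
Qed.

Lemma upper al n : sumn al = n -> al != [::] ->
  embeds_in_Rd (@Tam_le al n) (n - max_part al).
Proof.
move=> Hn Hne.
case: (max_part_idx Hne) => m Hm Em.
set L := max_part al. set s := psum al m.
have HsL : psum al m.+1 = s + L by rewrite psum_succ // Em.
have HsLn : s + L <= n by rewrite -HsL -Hn psum_le.
pose Fs c := [set x : Defs.arc al n | sA x == c].
pose Fe c := [set x : Defs.arc al n | sB x == c].
pose f (u : Tam al n) (i : 'I_(n - L)) : R :=
  if i < s then INR #|(val u).1 :&: Fs i.+1| else Ropp (INR #|(val u).2 :&: Fe (i + L).+1|).
exists f => u v; split.
- move=> Huv i; rewrite /f; case: ifP => _.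
  + apply: le_INR; apply/leP; apply: subset_leq_card; exact: setSI.
  + apply: Ropp_le_contravar; apply: le_INR; apply/leP; apply: subset_leq_card; apply: setSI.
    exact: mop_anti (valP u) (valP v) Huv.
- move=> Hf; rewrite /Tam_le /LG_le; apply/subsetP => x Hx; apply/negPn/negP => Hxv.
  case: (arc_props x) => x1 x2 x3 x4.
  case: (leqP (sA x) s) => Hxs.
  + have His : (sA x).-1 < s by rewrite prednK.
    have Hi : (sA x).-1 < n - L by rewrite ltn_subRL addnC (leq_trans _ HsLn) // ltn_add2r.
    have := Hf (Ordinal Hi); rewrite /f /= His (prednK x1).
    move/INR_le/leP => Hc0.
    have Hc : #|(val u).1 :&: Fs (sA x)| <= #|(val v).1 :&: Fs (sA x)| := Hc0.
    have Hsub : (val u).1 :&: Fs (sA x) \subset (val v).1 :&: Fs (sA x).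
      apply: (@chain_card _ _ _ _ (fun a b => sB b < sB a) _ _ _ Hc).
    * move=> a b; rewrite !inE => /eqP Ea /eqP Eb Nab.
      rewrite -neq_ltn; apply: contra Nab => /eqP EB; apply/eqP; apply: arc_eq => //.
      by rewrite Ea Eb.
    * move=> a b Ha; rewrite !inE => /eqP Ea /eqP Eb Hab.
      by apply: (startC Hn (valP u) Ha); rewrite ?Ea ?Eb.
    * move=> a b Ha; rewrite !inE => /eqP Ea /eqP Eb Hab.
      by apply: (startC Hn (valP v) Ha); rewrite ?Ea ?Eb.
    move/subsetP: Hsub => /(_ x); rewrite !inE Hx eqxx /= => /(_ isT) /andP [H _].
    by move: Hxv; rewrite H.
  + have [y Hy Hxy] : exists2 y, y \in (val v).2 & (y = x \/ Gedge x y).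
      case: (mop_X (valP v) Hxv) => [H | [y Hy Hxy]]; first by exists x => //; left.
      by exists y => //; right.
    case: (arc_props y) => y1 y2 y3 y4.
    have Hxn : sA x <= n by exact: ltnW (leq_trans x2 x3).
    have Rx : m <= rg al (sA x).
      by rewrite leqNgt rg_lt ?Hn // -/s -ltnNge.
    have Ry : m < rg al (sB y).
      case: Hxy => [-> | Hxy]; first by exact: leq_ltn_trans Rx (arc_rg x Hn).
      case: (edge_inv Hn Hxy) => _ [[H1 _] | [_ [_ [H3 [_ H5]]]]].
        by apply: (leq_ltn_trans Rx); rewrite H1 (arc_rg y Hn).
      apply: (leq_ltn_trans Rx); rewrite ltn_neqAle; apply/andP; split; first by apply/eqP.
      exact: rg_mono (ltnW H3).
    have HyB : s + L < sB y.
      by rewrite -HsL ltnNge -rg_lt ?Hn ?(ltn_trans y1 y2) // -leqNgt.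
    have HyL : L < sB y by apply: leq_ltn_trans (leq_addl _ _) HyB.
    have Hi : (sB y - L).-1 < n - L.
      by move: HyL y3; clear; lia.
    have His : ~~ ((sB y - L).-1 < s).
      by move: HyB HyL; clear; lia.
    have HE : ((sB y - L).-1 + L).+1 = sB y.
      by move: HyL; clear; lia.
    have := Hf (Ordinal Hi); rewrite /f /= (negbTE His) HE.
    move/Ropp_le_cancel/INR_le/leP => Hc0.
    have Hc : #|(val v).2 :&: Fe (sB y)| <= #|(val u).2 :&: Fe (sB y)| := Hc0.
    pose R := fun a b : Defs.arc al n => (rg al (sA a) < rg al (sA b)) ||
                  ((rg al (sA b) == rg al (sA a)) && (sA b < sA a)).
    have Hsub : (val v).2 :&: Fe (sB y) \subset (val u).2 :&: Fe (sB y).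
      apply: (@chain_card _ _ _ _ R _ _ _ Hc).
    * move=> a b; rewrite !inE => /eqP Ea /eqP Eb Nab.
      have NA : sA a != sA b.
        apply: contra Nab => /eqP EA; apply/eqP; apply: arc_eq => //.
        by rewrite Ea Eb.
      rewrite /R; case: (ltngtP (rg al (sA a)) (rg al (sA b))) => //= Er.
      by move: NA; rewrite neq_ltn orbC.
    * move=> a b Ha; rewrite !inE => /eqP Ea /eqP Eb /orP Hab.
      apply: (endC Hn (valP v) Ha); first by rewrite Ea Eb.
      by case: Hab => [H | /andP [/eqP H1 H2]]; [left | right].
    * move=> a b Ha; rewrite !inE => /eqP Ea /eqP Eb /orP Hab.
      apply: (endC Hn (valP u) Ha); first by rewrite Ea Eb.
      by case: Hab => [H | /andP [/eqP H1 H2]]; [left | right].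
    move/subsetP: Hsub => /(_ y); rewrite !inE Hy eqxx /= => /(_ isT) /andP [Hyu _].
    case: Hxy => [Exy | Hxy].
      by apply: (orth_disj (mop_orth (valP u)) Hx); rewrite -Exy.
    by move: (orth_edge (mop_orth (valP u)) Hx Hyu); rewrite Hxy.
Qed.

Definition indep_ok al (p q : nat * nat) : bool :=
  (p.1 < q.1) ==> (if rg al p.1 == rg al q.1 then p.2 < q.2
                   else [|| p.2 <= q.1, q.2 < p.2 | rg al p.2 == rg al q.1]).

Definition allowed al (S : seq (nat * nat)) (b : nat) : bool :=
  all (fun q => [|| b <= q.1, q.2 < b | rg al b == rg al q.1]) S.

Definition Inv al (S : seq (nat * nat)) (A : seq nat) : Prop :=
  [/\ uniq (map fst S),
      (forall p, p \in S -> [&& 0 < p.1, p.1 < p.2, p.2 <= sumn al & rg al p.1 != rg al p.2]),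
      (forall p q, p \in S -> q \in S -> indep_ok al p q),
      size S + max_part al = sumn al &
      [/\ sorted ltn A, (forall b, b \in A -> (0 < b) && (b <= sumn al)),
          (forall b, b \in A -> allowed al S b) & max_part al <= size A]].

Definition shp (x : nat) (p : nat * nat) := (p.1 + x, p.2 + x).

Lemma sorted_nth_lt (A : seq nat) i j : sorted ltn A -> i < j -> j < size A ->
  nth 0 A i < nth 0 A j.
Proof.
move=> HA Hij Hj.
by apply: (@sorted_ltn_nth _ ltn ltn_trans 0 A HA) => //; rewrite inE (ltn_trans Hij).
Qed.

Lemma construct al : exists S A, Inv al S A.
Proof.
elim: al => [|x al [S' [A' [H1 H2 H3 H4 [H5 H6 H7 H8]]]]].
  exists [::], [::]; split=> //; first by rewrite max_part_nil.
  by split=> //; rewrite max_part_nil.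
set L' := max_part al in H4 H8.
set t := minn x L'.
have HtL : t <= L' by rewrite geq_minr.
have Htx : t <= x by rewrite geq_minl.
have HtA : t <= size A' by apply: leq_trans HtL H8.
pose nw := [seq (i.+1, nth 0 A' i + x) | i <- iota 0 t].
exists (nw ++ map (shp x) S'), (iota 1 x ++ [seq b + x | b <- drop t A']).
have rgS : forall a, 0 < a -> rg (x :: al) (a + x) = (rg al a).+1 by move=> a Ha; apply: rg_shift.
have rgH : forall a, a <= x -> rg (x :: al) a = 0 by move=> a Ha; apply: rg_head.
have Anth : forall i, i < size A' -> 0 < nth 0 A' i /\ nth 0 A' i <= sumn al.
  by move=> i Hi; case/andP: (H6 _ (mem_nth 0 Hi)).
have memnw : forall p, p \in nw -> exists2 i, i < t & p = (i.+1, nth 0 A' i + x).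
  by move=> p /mapP [i]; rewrite mem_iota add0n => /andP [_ Hi] ->; exists i.
have memsh : forall p, p \in map (shp x) S' -> exists2 q, q \in S' & p = shp x q.
  by move=> p /mapP [q Hq ->]; exists q.
have fstE : map fst (nw ++ map (shp x) S') =
    map succn (iota 0 t) ++ map (addn^~ x) (map fst S').
  by rewrite map_cat -!map_comp.
split.
- rewrite fstE cat_uniq; apply/and3P; split.
  + by rewrite map_inj_uniq ?iota_uniq //; move=> a b [].
  + apply/hasPn=> a /mapP [c /mapP [q Hq ->] ->]; apply/negP=> /mapP [i].
    rewrite mem_iota add0n => /andP [_ Hi] E.
    have := H2 q Hq; case/andP=> Hq1 _.
    move: E Hi Htx Hq1; move: (q.1) (i : nat) => a0 b0; clear; lia.
  + by rewrite map_inj_uniq // => a b /addIn.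
- move=> p; rewrite mem_cat => /orP [/memnw [i Hi ->] | /memsh [q Hq ->]] /=.
  + have HiA : i < size A' by apply: leq_trans Hi HtA.
    case: (Anth i HiA) => Ha1 Ha2.
    rewrite rgH ?rgS //; last by apply: leq_trans Hi Htx.
    repeat (apply/andP; split) => //.
    * by move: Hi Htx Ha1 Ha2; move: (nth 0 A' i) (i : nat) => z0 z1; clear; lia.
    * by move: Hi Htx Ha1 Ha2; move: (nth 0 A' i) (i : nat) => z0 z1; clear; lia.
  + case/and4P: (H2 q Hq) => q1 q2 q3 q4.
    rewrite !rgS //; last by apply: ltn_trans q1 q2.
    repeat (apply/andP; split) => //.
    * by move: q1 q2 q3; move: (q.1) (q.2) => z0 z1; clear; lia.
    * by move: q1 q2 q3; move: (q.1) (q.2) => z0 z1; clear; lia.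
    * by move: q1 q2 q3; move: (q.1) (q.2) => z0 z1; clear; lia.
- move=> p q; rewrite !mem_cat => /orP [/memnw [i Hi ->] | /memsh [p' Hp ->]]
    /orP [/memnw [j Hj ->] | /memsh [q' Hq ->]]; rewrite /indep_ok /=.
  + have HjA : j < size A' by apply: leq_trans Hj HtA.
    have Hi' : i.+1 <= x := leq_trans Hi Htx.
    have Hj' : j.+1 <= x := leq_trans Hj Htx.
    rewrite (rgH _ Hi') (rgH _ Hj') eqxx.
    by apply/implyP=> Hij; rewrite ltn_add2r; apply: sorted_nth_lt.
  + case/and4P: (H2 q' Hq) => q1 q2 q3 q4.
    have HiA : i < size A' by apply: leq_trans Hi HtA.
    case: (Anth i HiA) => Ha1 Ha2.
    rewrite rgH ?rgS //; last by apply: leq_trans Hi Htx.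
    apply/implyP=> _ /=.
    have := H7 _ (mem_nth 0 HiA); move/allP/(_ q' Hq).
    by rewrite leq_add2r ltn_add2r ?eqSS.
  + case/and4P: (H2 p' Hp) => p1 p2 p3 p4.
    apply/implyP=> Hlt; exfalso; move: Hlt Hj Htx p1; clear; lia.
  + case/and4P: (H2 p' Hp) => p1 p2 p3 p4.
    case/and4P: (H2 q' Hq) => q1 q2 q3 q4.
    have := H3 p' q' Hp Hq; rewrite /indep_ok.
    rewrite !rgS ?ltn_add2r ?leq_add2r ?eqSS //; exact: ltn_trans p1 p2.
- rewrite size_cat size_map size_map size_iota max_part_cons /= -H4.
  by move: (addn_min_max x L'); rewrite -/t; clear; lia.
- have memA : forall b, b \in [seq b + x | b <- drop t A'] ->
      exists2 k, t + k < size A' & b = nth 0 A' (t + k) + x.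
    move=> b /mapP [c Hc ->]; move: Hc => /(nthP 0) [k Hk <-].
    exists k; last by rewrite nth_drop.
    by rewrite size_drop in Hk; move: Hk; clear -k; move: (size A') (k : nat) t => z0 z1 z2; lia.
  split.
  + rewrite sorted_pairwise; last exact: ltn_trans.
    rewrite pairwise_cat; apply/and3P; split.
    * apply/allrelP=> a c; rewrite mem_iota => Ha /memA [k Hk ->].
      have := Anth _ Hk; case=> Hk1 _.
      by move: Ha Hk1; move: (nth 0 A' (t + k)) => z0; clear; lia.
    * by rewrite -sorted_pairwise ?iota_ltn_sorted //; exact: ltn_trans.
    * rewrite -sorted_pairwise; last exact: ltn_trans.
      rewrite sorted_map; apply: (@sub_sorted _ ltn); first by move=> a c /=; rewrite ltn_add2r.
      exact: drop_sorted.
  + move=> b; rewrite mem_cat => /orP [| /memA [k Hk ->]].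
      by rewrite mem_iota /=; clear; lia.
    have := Anth _ Hk; case=> Hk1 Hk2.
    by move: Hk1 Hk2 => /=; move: (nth 0 A' (t + k)) => z0; clear; lia.
  + move=> b Hb; apply/allP=> q; rewrite mem_cat => /orP [/memnw [i Hi ->] | /memsh [q' Hq ->]] /=.
    * move: Hb; rewrite mem_cat => /orP [| /memA [k Hk ->]].
        rewrite mem_iota => Hb.
        have Hbx : b <= x by move: Hb; clear; lia.
        have Hix : i.+1 <= x := leq_trans Hi Htx.
        by rewrite (rgH b Hbx) (rgH _ Hix) eqxx !orbT.
      have HiA : i < size A' by apply: leq_trans Hi HtA.
      have Hlt : nth 0 A' i < nth 0 A' (t + k).
        apply: (@sorted_nth_lt A' i (t + k) H5) => //.
        by move: Hi; clear -k; move: t (k:nat) (i:nat) => z0 z1 z2; lia.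
      by rewrite ltn_add2r Hlt orbT.
    * case/and4P: (H2 q' Hq) => q1 q2 q3 q4.
      move: Hb; rewrite mem_cat => /orP [| /memA [k Hk ->]].
        by rewrite mem_iota => Hb; rewrite (_ : b <= q'.1 + x) //; move: Hb q1; move: (q'.1) => z0; clear; lia.
      have := Anth _ Hk; case=> Hk1 _.
      have := H7 _ (mem_nth 0 Hk); move/allP/(_ q' Hq).
      by rewrite !rgS // leq_add2r ltn_add2r eqSS.
  + rewrite size_cat size_iota size_map size_drop max_part_cons.
    by move: (addn_min_max x L') H8; rewrite -/t; clear; lia.
Qed.

Lemma noedge al n (x y : Defs.arc al n) : sumn al = n -> sA x < sA y ->
  indep_ok al (sA x, sB x) (sA y, sB y) -> ~~ Gedge x y && ~~ Gedge y x.
Proof.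
move=> Hn Hlt; rewrite /indep_ok /= Hlt /= => Hok.
apply/andP; split; apply/negP => /(edge_inv Hn) [_ [[H1 [H2 H3]] | [H1 [H2 [H3 [H4 H5]]]]]].
- by move: Hok; rewrite H1 eqxx ltnNge H3.
- by move: H2; rewrite ltnNge ltnW.
- by move: H2; rewrite leqNgt Hlt.
- move: Hok; have -> : (rg al (sA x) == rg al (sA y)) = false by apply/eqP=> E; apply: H1.
  rewrite leqNgt H3 /= ltnNge H4 /= => /eqP E; apply: H5; by rewrite E.
Qed.

Lemma ext_LG (T : finType) (e : rel T) (p : {set T} * {set T}) : orth_pair e p ->
  {q : LG e | p.1 \subset (val q).1 /\ p.2 \subset (val q).2}.
Proof.
move=> Hp.
have H : exists q, [&& max_orth_pair e q, p.1 \subset q.1 & p.2 \subset q.2].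
  by case: (mop_ext Hp) => q [H1 H2 H3]; exists q; rewrite H1 H2 H3.
have := xchooseP H; case/and3P=> H1 H2 H3.
by exists (exist _ (xchoose H) H1).
Qed.

Lemma lower al n d : sumn al = n -> embeds_in_Rd (@Tam_le al n) d -> n - max_part al <= d.
Proof.
move=> Hn Hemb.
case: (construct al) => S [A [H1 H2 H3 H4 _]].
have Hm : n - max_part al = size S by rewrite -Hn -H4 addnK.
rewrite Hm; set m := size S.
have Hmem : forall i : 'I_m, nth (0,0) S i \in S by move=> i; apply: mem_nth.
have Hp : forall i : 'I_m, is_arc al (n:=n) (inord (nth (0,0) S i).1, inord (nth (0,0) S i).2).
  move=> i; case/and4P: (H2 _ (Hmem i)); rewrite Hn => p1 p2 p3 p4.
  rewrite /is_arc /= !inordK; last 2 first.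
  - by rewrite ltnS.
  - by rewrite ltnS ltnW // (leq_trans p2 p3).
  rewrite p1 p2 /= same_region_rg ?Hn //; last by apply: ltn_trans p1 p2.
  exact: ltnW (leq_trans p2 p3).
pose xi (i : 'I_m) : Defs.arc al n := exist (fun p : 'I_n.+1 * 'I_n.+1 => is_arc al p) _ (Hp i).
have xiA : forall i, sA (xi i) = (nth (0,0) S i).1.
  move=> i; rewrite /sA /= inordK //; case/and4P: (H2 _ (Hmem i)); rewrite Hn => p1 p2 p3 _.
  by rewrite ltnS ltnW // (leq_trans p2 p3).
have xiB : forall i, sB (xi i) = (nth (0,0) S i).2.
  move=> i; rewrite /sB /= inordK //; case/and4P: (H2 _ (Hmem i)); rewrite Hn => p1 p2 p3 _.
  by rewrite ltnS.
have xiA_inj : forall i j, sA (xi i) = sA (xi j) -> i = j.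
  move=> i j; rewrite !xiA => E; apply: ord_inj; apply/eqP.
  have Hi : (i : nat) < size [seq p.1 | p <- S] by rewrite size_map.
  have Hj : (j : nat) < size [seq p.1 | p <- S] by rewrite size_map.
  by rewrite -(nth_uniq 0 Hi Hj H1) !(nth_map (0,0)) ?E.
have noE : forall i j, ~~ Gedge (xi i) (xi j).
  move=> i j; case: (eqVneq i j) => [-> | Nij].
    by rewrite /Gedge eqxx.
  have NA : sA (xi i) != sA (xi j) by apply: contra Nij => /eqP /xiA_inj ->.
  case: (ltngtP (sA (xi i)) (sA (xi j))) NA => // Hlt _.
    have := H3 _ _ (Hmem i) (Hmem j).
    rewrite [nth _ S i]surjective_pairing [nth _ S j]surjective_pairing.
    rewrite -(xiA i) -(xiA j) -(xiB i) -(xiB j).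
    by move=> /(noedge Hn Hlt) /andP [].
  have := H3 _ _ (Hmem j) (Hmem i).
  rewrite [nth _ S i]surjective_pairing [nth _ S j]surjective_pairing.
  rewrite -(xiA i) -(xiA j) -(xiB i) -(xiB j).
  by move=> /(noedge Hn Hlt) /andP [].
pose e := @Gedge al n.
have oA : forall j, orth_pair e ([set xi j], xi @: [set i | i != j]).
  move=> j; apply: orth_intro => /=.
    move=> z; rewrite in_set1 => /eqP -> /imsetP [i]; rewrite inE => Nij E.
    by move: Nij; rewrite (xiA_inj i j) ?eqxx //; rewrite -E.
  by move=> z y; rewrite in_set1 => /eqP -> /imsetP [i _ ->]; apply: noE.
have oB : forall i, orth_pair e ([set z | (z != xi i) && ~~ e z (xi i)], [set xi i]).
  move=> i; apply: orth_intro => /=.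
    by move=> z; rewrite !inE => /andP [/negbTE ->].
  by move=> z y; rewrite !inE => /andP [_ H] /eqP ->.
pose a j := sval (ext_LG (oA j)).
pose b i := sval (ext_LG (oB i)).
apply: (std_example (a := a) (b := b) Hemb).
- move=> i j Nij; rewrite /Tam_le /LG_le.
  case: (proj2_sig (ext_LG (oA j))) => HA1 HA2.
  case: (proj2_sig (ext_LG (oB i))) => HB1 HB2.
  have Hq := valP (sval (ext_LG (oA j))).
  apply/subsetP=> z Hz; apply: (subsetP HB1); rewrite inE.
  have Hxi : xi i \in (val (sval (ext_LG (oA j)))).2.
    apply: (subsetP HA2); apply/imsetP; exists i => //; by rewrite inE.
  apply/andP; split.
    by apply/negP=> /eqP E; apply: (orth_disj (mop_orth Hq) Hz); rewrite E.
  exact: (orth_edge (mop_orth Hq) Hz Hxi).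
- move=> i; rewrite /Tam_le /LG_le; apply/negP=> Hs.
  case: (proj2_sig (ext_LG (oA i))) => HA1 _.
  case: (proj2_sig (ext_LG (oB i))) => _ HB2.
  have Hq := valP (sval (ext_LG (oB i))).
  have H1' : xi i \in (val (sval (ext_LG (oA i)))).1 by apply: (subsetP HA1); rewrite in_set1.
  have H2' : xi i \in (val (sval (ext_LG (oB i)))).2 by apply: (subsetP HB2); rewrite in_set1.
  exact: (orth_disj (mop_orth Hq) (subsetP Hs _ H1') H2').
Qed.

Theorem proposition4p11 (n : nat) (alpha : seq nat) :
  0 < n -> all (fun a => 0 < a) alpha -> sumn alpha = n ->
  order_dimension_is (@Tam_le alpha n) (n - max_part alpha).
Proof.
move=> Hn _ Hs; split.
  apply: upper => //; apply/eqP=> E; move: Hs Hn; rewrite E /= => <-.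
  by rewrite ltnn.
by move=> d'; apply: lower.
Qed.
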